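(* Let $X$ be a $T_0$ $k$-bounded sober space. If the $\operatorname{Irr}$-convergence class $\mathcal{I}$ on $X$ satisfies the (Iterated limits) axiom, then $X$ is $\operatorname{Irr}$-continuous.
   Context: For a topological space $X$, a nonempty subset $E$ is irreducible if whenever $E\subseteq A_1\cup A_2$ with $A_1,A_2$ closed, $E\subseteq A_1$ or $E\subseteq A_2$. The specialisation order is $x\le y$ iff $x\in\operatorname{cl}(\{y\})$; $\uparrow x=\{z:z\ge x\}$; $\bigvee$ denotes supremum in this order. $\operatorname{Irr}^+(X)$ is the set of irreducible subsets whose supremum exists. $X$ is $k$-bounded sober if every closed set $F\in\operatorname{Irr}^+(X)$ is the closure of a unique singleton. $x\ll_{\operatorname{Irr}} y$ iff for every $E\in\operatorname{Irr}^+(X)$ with $\bigvee E\ge y$, $E\cap\uparrow x\ne\emptyset$; $\twoheaddownarrow_{\operatorname{Irr}} x=\{y:y\ll_{\operatorname{Irr}} x\}$. $X$ is $\operatorname{Irr}$-continuous if for every $x$, $\twoheaddownarrow_{\operatorname{Irr}} x$ is irreducible and $x=\bigvee\twoheaddownarrow_{\operatorname{Irr}} x$. A net $(x_i)_{i\in I}$ is a map from a preorder $(I,\le)$ to $X$. It $\operatorname{Irr}$-converges to $y$ if there is $E\in\operatorname{Irr}^+(X)$ with $\bigvee E\ge y$ such that for each $e\in E$ there is $k(e)\in I$ with $x_i\ge e$ for all $i\ge k(e)$; $\mathcal{I}$ is the set of pairs $((x_i)_{i\in I},y)$ with $(x_i)$ $\operatorname{Irr}$-converging to $y$. (Iterated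 limits) for $\mathcal{I}$: if $((x_i)_{i\in I},x)\in\mathcal{I}$ and $((x_{i,j})_{j\in J(i)},x_i)\in\mathcal{I}$ for all $i\in I$, then $((x_{i,f(i)})_{(i,f)\in I\times M},x)\in\mathcal{I}$, where $M=\prod_{i\in I}J(i)$ and $I\times M$ carries the product preorder ($(i,f)\le(i',f')$ iff $i\le i'$ and $f(l)\le f'(l)$ for all $l$). *)

(* Defs.v *)
From HB Require Import structures.
From mathcomp Require Import all_boot all_order.
From mathcomp Require Import all_classical topology.
Set Implicit Arguments. Unset Strict Implicit. Unset Printing Implicit Defensive.
Local Open Scope classical_set_scope.

Section IrrDefs.
Context {X : topologicalType}.

Definition spec_le (x y : X) : Prop := closure [set y] x.

Definition upset (x : X) : set X := [set z | spec_le x z].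

Definition is_sup (E : set X) (s : X) : Prop :=
  (forall e, E e -> spec_le e s) /\
  (forall u, (forall e, E e -> spec_le e u) -> spec_le s u).

Definition irreducible (E : set X) : Prop :=
  E !=set0 /\
  forall A1 A2 : set X, closed A1 -> closed A2 ->
    E `<=` A1 `|` A2 -> E `<=` A1 \/ E `<=` A2.

Definition IrrPlus (E : set X) : Prop := irreducible E /\ exists s, is_sup E s.

Definition k_bounded_sober : Prop :=
  forall F : set X, closed F -> IrrPlus F -> exists! x : X, F = closure [set x].

Definition irr_way_below (x y : X) : Prop :=
  forall E : set X, IrrPlus E ->
    forall s, is_sup E s -> spec_le y s -> E `&` upset x !=set0.

Definition irr_ddown (x : X) : set X := [set y | irr_way_below y x].

Definition irr_continuous : Prop :=
  forall x : X, irreducible (irr_ddown x) /\ is_sup (irr_ddown x) x.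

Definition is_preorder (I : Type) (le : I -> I -> Prop) : Prop :=
  (forall i, le i i) /\ (forall i j k, le i j -> le j k -> le i k).

Definition irr_converges (I : Type) (le : I -> I -> Prop) (x : I -> X) (y : X) : Prop :=
  exists E : set X, IrrPlus E /\ (exists s, is_sup E s /\ spec_le y s) /\
    forall e, E e -> exists k : I, forall i, le k i -> spec_le e (x i).

Definition in_irr_class (I : Type) (le : I -> I -> Prop) (x : I -> X) (y : X) : Prop :=
  is_preorder le /\ irr_converges le x y.

Definition iter_le (I : Type) (le : I -> I -> Prop) (J : I -> Type)
  (leJ : forall i, J i -> J i -> Prop)
  (p q : I * (forall i, J i)) : Prop :=
  le p.1 q.1 /\ forall l : I, leJ l (p.2 l) (q.2 l).

Definition iterated_limits : Prop :=
  forall (I : Type) (le : I -> I -> Prop) (x : I -> X) (y : X)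
         (J : I -> Type) (leJ : forall i, J i -> J i -> Prop)
         (xx : forall i, J i -> X),
    in_irr_class le x y ->
    (forall i, in_irr_class (leJ i) (xx i) (x i)) ->
    in_irr_class (iter_le le leJ)
      (fun p : I * (forall i, J i) => xx p.1 (p.2 p.1)) y.

End IrrDefs.

(* Main.v *)
Require Import Defs.
From mathcomp Require Import all_boot all_order.
From mathcomp Require Import all_classical topology.
Set Implicit Arguments. Unset Strict Implicit. Unset Printing Implicit Defensive.
Local Open Scope classical_set_scope.

Section Aux.
Context {X : topologicalType}.

Lemma cl_sub (A B : set X) : closed A -> B `<=` A -> closure B `<=` A.
Proof. by move=> cA BA; rewrite (closure_id A).1 //; apply: closureS. Qed.

Lemma sle_refl (x : X) : spec_le x x.
Proof. exact: subset_closure. Qed.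

Lemma sle_trans (x y z : X) : spec_le x y -> spec_le y z -> spec_le x z.
Proof.
move=> hxy hyz; apply: (cl_sub (@closed_closure _ [set z])) hxy.
by move=> w ->.
Qed.

Lemma single_irrplus (x : X) : IrrPlus [set x].
Proof.
split; first split.
- by exists x.
- move=> A1 A2 _ _ H; case: (H x erefl) => h.
    by left => w ->.
  by right => w ->.
- exists x; split; first by move=> e ->; apply: sle_refl.
  by move=> u Hu; apply: Hu.
Qed.

End Aux.

Theorem lemma4p6 (X : topologicalType) :
  @kolmogorov_space X -> @k_bounded_sober X -> @iterated_limits X ->
  @irr_continuous X.
Proof.
move=> _ ksob IL x.
pose P (E : set X) := IrrPlus E /\ exists s, is_sup E s /\ spec_le x s.
pose I := {E : set X | P E}.
have Px : P [set x].
  split; first exact: single_irrplus.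
  exists x; split; last exact: sle_refl.
  split; first by move=> e ->; apply: sle_refl.
  by move=> u Hu; apply: Hu.
pose i0 : I := exist _ _ Px.
pose J := fun i : I => {e : X | proj1_sig i e}.
pose leJ := fun (i : I) (a b : J i) => spec_le (proj1_sig a) (proj1_sig b).
have H1 : in_irr_class (fun _ _ : I => True) (fun _ => x) x.
  split; first by split.
  exists [set x]; split; first exact: single_irrplus.
  split; last by move=> e -> ; exists i0 => i _; apply: sle_refl.
  have [_ [s [hs hx]]] := Px; by exists s.
have H2 : forall i : I, in_irr_class (@leJ i) (fun j : J i => proj1_sig j) x.
  move=> [E [HE [s [hs hx]]]]; split.
    split; first by move=> a; apply: sle_refl.
    by move=> a b c; apply: sle_trans.
  exists E; split => //; split; first by exists s.
  move=> e He; exists (exist _ e He) => j; done.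
have [_ [F [HF [[s [hs hxs]] Hconv]]]] := IL _ _ _ _ J leJ _ H1 H2.
have Fdd : F `<=` irr_ddown x.
  move=> a Fa E HE s' hs' hx.
  have [[i1 f] Hk] := Hconv a Fa.
  have PE : P E by split => //; exists s'.
  have := Hk (exist _ E PE, f).
  have hle : iter_le (fun _ _ : I => True) leJ (i1, f) (exist _ E PE, f).
    by split => // l; apply: sle_refl.
  move=> /(_ hle).
  move=> hae; exists (sval (f (exist _ E PE))); split => //.
  exact: (svalP (f (exist _ E PE))).
have ddle : forall a, irr_ddown x a -> spec_le a x.
  move=> a ha; have hh : [set x] `&` upset a !=set0.
    apply: (ha _ (single_irrplus x) x) => //; last exact: sle_refl.
    split; first by move=> e ->; apply: sle_refl.
    by move=> u Hu; apply: Hu.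
  case: hh => e [ex hx]; by move: hx; rewrite /upset /= ex.
have clF : IrrPlus (closure F).
  case: HF => [[[f Ff] Hirr] _]; split; first split.
  - by exists f; apply: subset_closure.
  - move=> A1 A2 c1 c2 H.
    case: (Hirr A1 A2 c1 c2 (subset_trans (@subset_closure _ F) H)) => h.
      by left; apply: cl_sub.
    by right; apply: cl_sub.
  - exists s; split.
      apply: cl_sub; first exact: closed_closure.
      by move=> e Fe; apply: hs.1.
    move=> u Hu; apply: hs.2 => e Fe; apply: Hu; exact: subset_closure.
have [z [Hz _]] := ksob _ (@closed_closure _ F) clF.
have xz : spec_le x z.
  apply: sle_trans hxs _; apply: hs.2 => e Fe.
  rewrite /spec_le -Hz; exact: subset_closure.
have ddcl : irr_ddown x `<=` closure F.
  move=> a ha; rewrite Hz; exact: (sle_trans (ddle a ha) xz).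
split.
- case: HF => [[[f Ff] Hirr] _]; split; first by exists f; apply: Fdd.
  move=> A1 A2 c1 c2 H.
  case: (Hirr A1 A2 c1 c2 (subset_trans Fdd H)) => h.
    by left; apply: subset_trans ddcl _; apply: cl_sub.
  by right; apply: subset_trans ddcl _; apply: cl_sub.
- split; first exact: ddle.
  move=> u Hu; apply: sle_trans hxs _; apply: hs.2 => e Fe; apply: Hu.
  exact: Fdd.
Qed.
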